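(* For a permutation class $\mathcal{C}$ the following are equivalent: (a) $\mathcal{C}$ has unbounded horizontal path-width; (b) $\mathcal{C}$ contains horizontal alternations of arbitrarily large length; (c) $\mathcal{C}$ contains a horizontal monotone juxtaposition as a subclass.
   Context: Permutations of length $n$ are identified with their diagrams $\{(i,\pi_i)\}$; a permutation class is a set of permutations closed under containment (pattern containment: some subsequence in the same relative order). Intervalicity of $A\subseteq[n]$ is the least number of disjoint integer intervals with union $A$; the grid-complexity of a point set is the maximum of the intervalicities of its projections onto the two axes. The horizontal path-width of $\pi$ is the maximum over $i\in[n]$ of the grid-complexity of $\{(1,\pi_1),\dots,(i,\pi_i)\}$; a class has unbounded horizontal path-width if these values are unbounded over its members. A permutation $\pi$ is a horizontal alternation if there are no indices $i<j$ with $\pi_i$ odd and $\pi_j$ even (all even entries precede all odd entries). $\mathrm{Inc}$, $\mathrm{Dec}$ are the classes of increasing and decreasing permutations. A horizontal monotone juxtaposition is a grid class $\mathrm{Grid}(\mathcal{C}_1\ \mathcal{C}_2)$ of a $2\times1$ gridding matrix with $\mathcal{C}_1,\mathcal{C}_2\in\{\mathrm{Inc},\mathrm{Dec}\}$, i.e., the class of permutations $\pi$ of length $n$ for which there is $m\in\{0,\dots,n\}$ such that $\pi_1,\dots,\pi_m$ is a pattern in $\mathcal{C}_1$ and $\pi_{m+1},\dots,\pi_n$ is a pattern in $\mathcal{C}_2$. *)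

(* Defs.v *)
From mathcomp Require Import all_boot.
Set Implicit Arguments. Unset Strict Implicit. Unset Printing Implicit Defensive.

(* A permutation of length n is the sequence pi_1 ... pi_n of its values,
   a rearrangement of 1, ..., n. Its diagram is {(i, pi_i)}. *)
Definition is_perm (p : seq nat) : Prop := perm_eq p (iota 1 (size p)).

Definition order_iso (s t : seq nat) : Prop :=
  size s = size t /\
  forall i j, i < size s -> j < size s ->
    (nth 0 s i < nth 0 s j) = (nth 0 t i < nth 0 t j).

Definition contains (p q : seq nat) : Prop :=
  exists s, subseq s p /\ order_iso s q.

Definition perm_class (C : seq nat -> Prop) : Prop :=
  (forall p, C p -> is_perm p) /\
  (forall p q, C p -> is_perm q -> contains p q -> C q).

Definition in_interval (iv : nat * nat) (x : nat) : bool := (iv.1 <= x <= iv.2).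

Definition intervalicity_le (A : seq nat) (k : nat) : Prop :=
  exists I : seq (nat * nat),
    size I <= k /\
    (forall iv, iv \in I -> iv.1 <= iv.2) /\
    (forall i j x, i < size I -> j < size I -> i != j ->
        ~~ (in_interval (nth (0,0) I i) x && in_interval (nth (0,0) I j) x)) /\
    (forall x, (x \in A) = has (fun iv => in_interval iv x) I).

(* "grid-complexity of the point set {(i, p_i) : i <= m} is at most k":
   both projections have intervalicity at most k. *)
Definition prefix_gc_le (p : seq nat) (m k : nat) : Prop :=
  intervalicity_le (iota 1 m) k /\ intervalicity_le (take m p) k.

Definition hpw_le (p : seq nat) (k : nat) : Prop :=
  forall m, 1 <= m <= size p -> prefix_gc_le p m k.

Definition unbounded_hpw (C : seq nat -> Prop) : Prop :=
  forall k, exists p, C p /\ ~ hpw_le p k.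

Definition horizontal_alternation (p : seq nat) : Prop :=
  forall i j, i < j < size p -> ~~ (odd (nth 0 p i) && ~~ odd (nth 0 p j)).

Definition monotone (inc : bool) (s : seq nat) : bool :=
  if inc then sorted ltn s else sorted (fun x y => y < x) s.

Definition in_juxtaposition (c1 c2 : bool) (p : seq nat) : Prop :=
  is_perm p /\ exists m, m <= size p /\ monotone c1 (take m p) /\ monotone c2 (drop m p).

(* Main.v *)
Require Import Defs.
From mathcomp Require Import all_boot.
From mathcomp Require Import zify.
From Stdlib Require Import Classical.
Set Implicit Arguments. Unset Strict Implicit. Unset Printing Implicit Defensive.

Definition rc (c : bool) : rel nat := fun x y => if c then x < y else y < x.

Lemma monotoneE c s : monotone c s = sorted (rc c) s.
Proof. by case: c. Qed.

Lemma rc_trans c : transitive (rc c).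
Proof. by case: c => y x z /=; lia. Qed.

Lemma rc_irr c : irreflexive (rc c).
Proof. by case: c => x /=; rewrite ltnn. Qed.

Lemma sorted_sub_subseq c s1 s2 :
  sorted (rc c) s1 -> sorted (rc c) s2 -> {subset s1 <= s2} -> subseq s1 s2.
Proof.
move=> h1 h2 hs.
have -> : s1 = [seq x <- s2 | x \in s1].
  apply: (irr_sorted_eq (@rc_trans c) (@rc_irr c)) => //.
    exact: (sorted_filter (@rc_trans c) _ h2).
  move=> x; rewrite mem_filter; case e: (x \in s1) => //=; by rewrite hs.
exact: filter_subseq.
Qed.

Lemma ES_aux n : forall (s : seq nat) a b, size s <= n -> uniq s -> 2 ^ (a + b) <= size s ->
  exists t, subseq t s /\ ((a <= size t /\ sorted ltn t) \/ (b <= size t /\ sorted (fun x y => y < x) t)).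
Proof.
elim: n => [|n IH] s a b hsz hu hb.
  have : 0 < 2 ^ (a + b) by rewrite expn_gt0.
  lia.
case: s hsz hu hb => [|x s'] hsz hu hb.
  have : 0 < 2 ^ (a + b) by rewrite expn_gt0. simpl in hb. lia.
case: a hb => [|a] hb.
  by exists [::]; split; [exact: sub0seq | left].
case: b hb => [|b] hb.
  by exists [::]; split; [exact: sub0seq | right].
move: hu => /= /andP [hx hu].
set L := [seq y <- s' | x < y].
set D := [seq y <- s' | y < x].
have hLD : size L + size D = size s'.
  rewrite !size_filter -(count_predC (fun y => x < y) s'); congr (_ + _).
  apply: eq_in_count => y ys /=.
  have : y != x by apply/eqP => e; rewrite -e ys in hx.
  lia.
have hp : 2 ^ (a.+1 + b.+1) = (2 ^ (a + b.+1)).*2.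
  by rewrite addSn expnS -muln2 mulnC.
have hp' : 2 ^ (a + b.+1) = 2 ^ (a.+1 + b).
  by rewrite addnS addSn.
rewrite hp /= in hb.
have [hL|hD] : 2 ^ (a + b.+1) <= size L \/ 2 ^ (a.+1 + b) <= size D.
  rewrite -hp'; lia.
- have := IH L a b.+1.
  case.
  + rewrite /L size_filter; have := count_size (fun y => x < y) s'; simpl in hsz; lia.
  + exact: filter_uniq.
  + exact: hL.
  move=> t [ht [[ha hs]|[hb' hs]]].
    exists (x :: t); split.
      by rewrite /= eqxx; exact: (subseq_trans ht (filter_subseq _ s')).
    left; split; first by rewrite /=.
    rewrite /= (path_sortedE ltn_trans) hs andbT.
    apply/allP => y /(mem_subseq ht); by rewrite mem_filter => /andP [].
  exists t; split; last by right.
  exact: (subseq_trans ht (subseq_trans (filter_subseq _ s') (subseq_cons s' x))).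
- have := IH D a.+1 b.
  case.
  + rewrite /D size_filter; have := count_size (fun y => y < x) s'; simpl in hsz; lia.
  + exact: filter_uniq.
  + exact: hD.
  move=> t [ht [[ha hs]|[hb' hs]]].
    exists t; split; last by left.
    exact: (subseq_trans ht (subseq_trans (filter_subseq _ s') (subseq_cons s' x))).
  exists (x :: t); split.
    by rewrite /= eqxx; exact: (subseq_trans ht (filter_subseq _ s')).
  right; split; first by rewrite /=.
  have tr : transitive (fun x y : nat => y < x) by move=> ? ? ? /=; lia.
  rewrite /= (path_sortedE tr) hs andbT.
  apply/allP => y /(mem_subseq ht); by rewrite mem_filter => /andP [].
Qed.

Lemma ES2 M s : uniq s -> 2 ^ (M + M) <= size s ->
  exists c t, subseq t s /\ M <= size t /\ sorted (rc c) t.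
Proof.
move=> hu hs; have [t [ht [[h1 h2]|[h1 h2]]]] := ES_aux (leqnn (size s)) hu hs.
  by exists true, t.
by exists false, t.
Qed.

Lemma perm_uniqP p : is_perm p -> uniq p.
Proof. by move=> h; rewrite (perm_uniq h) iota_uniq. Qed.

Lemma perm_memP p x : is_perm p -> (x \in p) = (0 < x <= size p).
Proof. by move=> h; rewrite (perm_mem h) mem_iota; lia. Qed.

Lemma alt_split p : horizontal_alternation p ->
  all (fun x => ~~ odd x) (take (find odd p) p) /\ all odd (drop (find odd p) p).
Proof.
move=> ha; split.
  apply/(all_nthP 0) => i; rewrite size_take_min => hi.
  have hi' : i < find odd p by lia.
  by rewrite nth_take // (before_find _ hi').
apply/(all_nthP 0) => i; rewrite size_drop => hi.
rewrite nth_drop.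
have hs : has odd p by rewrite has_find; lia.
have h0 := nth_find 0 hs.
case: i hi => [|i] hi; first by rewrite addn0.
have := ha (find odd p) (find odd p + i.+1).
rewrite h0 /= negbK; apply; lia.
Qed.

Lemma alt_cat l1 l2 : all (fun x => ~~ odd x) l1 -> all odd l2 ->
  horizontal_alternation (l1 ++ l2).
Proof.
move=> /(all_nthP 0) h1 /(all_nthP 0) h2 i j /andP [hij hj].
rewrite !nth_cat.
case: ltnP => hi.
  by rewrite (negbTE (h1 _ hi)).
have hj' : ~~ (j < size l1) by lia.
rewrite (negbTE hj') (h2 (j - size l1)) ?andbF //; rewrite size_cat in hj; lia.
Qed.

Lemma evens_size p : is_perm p -> horizontal_alternation p ->
  (size p)./2 <= size (take (find odd p) p).
Proof.
move=> hp ha; have [hE hO] := alt_split ha.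
rewrite -(size_iota 1 (size p)./2) -(size_map double).
apply: uniq_leq_size.
  by rewrite (map_inj_uniq double_inj) iota_uniq.
move=> x /mapP [i]; rewrite mem_iota => hi ->.
have : i.*2 \in p by rewrite (perm_memP _ hp); move: hi; rewrite -!muln2; have := leq_half_double (size p) ; lia.
rewrite -{1}(cat_take_drop (find odd p) p) mem_cat => /orP [] // hd.
by have := allP hO _ hd; rewrite odd_double.
Qed.

Lemma interval_lb A k : uniq A -> all (fun x => ~~ odd x) A -> intervalicity_le A k -> size A <= k.
Proof.
move=> hu hev [I [hI [_ [_ hmem]]]].
set idx := fun x => find (fun iv => in_interval iv x) I.
apply: leq_trans hI.
rewrite -(size_map idx) -(size_iota 0 (size I)).
apply: uniq_leq_size.
  rewrite map_inj_in_uniq // => x y hx hy he.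
  have hhx : has (fun iv => in_interval iv x) I by rewrite -hmem.
  have hhy : has (fun iv => in_interval iv y) I by rewrite -hmem.
  have ix := nth_find (0,0) hhx; have iy := nth_find (0,0) hhy.
  rewrite -/(idx x) he in ix; rewrite -/(idx y) in iy.
  have hlt : idx y < size I by rewrite /idx -has_find.
  case: (ltngtP x y) => // hxy; exfalso.
  - have : x.+1 \in A.
      rewrite hmem; apply/hasP; exists (nth (0,0) I (idx y)); first exact: mem_nth.
      move: ix iy; rewrite /in_interval; case: (nth _ I _) => a b /=; lia.
    by move=> /(allP hev); rewrite /= (allP hev _ hx).
  - have : y.+1 \in A.
      rewrite hmem; apply/hasP; exists (nth (0,0) I (idx y)); first exact: mem_nth.
      move: ix iy; rewrite /in_interval; case: (nth _ I _) => a b /=; lia.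
    by move=> /(allP hev); rewrite /= (allP hev _ hy).
move=> i /mapP [x hx ->]; rewrite mem_iota /= /idx -has_find -hmem hx.
done.
Qed.

Lemma b_to_a C : perm_class C ->
  (forall N, exists p, C p /\ N <= size p /\ horizontal_alternation p) -> unbounded_hpw C.
Proof.
move=> [HC1 HC2] hb k.
have [p [Cp [hs ha]]] := hb (k.+1).*2.
exists p; split => // hh.
have hp := HC1 _ Cp.
have he := evens_size hp ha.
have hk : k < size (take (find odd p) p) by move: hs he; rewrite -muln2; have := leq_half_double (size p); lia.
have := hh (find odd p).
case.
  rewrite find_size andbT; move: hk; rewrite size_take_min; lia.
move=> _ hA.
have := interval_lb (take_uniq _ (perm_uniqP hp)) (proj1 (alt_split ha)) hA.
by rewrite leqNgt hk.
Qed.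

Definition mono (c : bool) (l : seq nat) := if c then l else rev l.
Definition evs N := [seq i.*2 | i <- iota 1 N].
Definition ods N := [seq i.*2.-1 | i <- iota 1 N].

Lemma mono_mem c l : mono c l =i l.
Proof. by case: c => x //=; rewrite mem_rev. Qed.

Lemma mono_size c l : size (mono c l) = size l.
Proof. by case: c; rewrite /= ?size_rev. Qed.

Lemma mono_all c a l : all a (mono c l) = all a l.
Proof. by case: c; rewrite /= ?all_rev. Qed.

Lemma mono_uniq c l : uniq (mono c l) = uniq l.
Proof. by case: c; rewrite /= ?rev_uniq. Qed.

Lemma mono_sorted c l : sorted ltn l -> monotone c (mono c l).
Proof. by case: c => //= h; rewrite rev_sorted. Qed.

Lemma c_to_b C c1 c2 : (forall p, in_juxtaposition c1 c2 p -> C p) ->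
  forall N, exists p, C p /\ N <= size p /\ horizontal_alternation p.
Proof.
move=> hC N.
exists (mono c1 (evs N) ++ mono c2 (ods N)).
have hsE : size (mono c1 (evs N)) = N by rewrite mono_size size_map size_iota.
have hsO : size (mono c2 (ods N)) = N by rewrite mono_size size_map size_iota.
split; last split.
- apply: hC; split.
    rewrite /is_perm size_cat hsE hsO; apply: uniq_perm.
    + rewrite cat_uniq !mono_uniq (map_inj_uniq double_inj) iota_uniq /=.
      rewrite map_inj_in_uniq ?iota_uniq ?andbT.
        apply/hasP => -[x]; rewrite mono_mem => /mapP [i]; rewrite mem_iota => hi ->.
        rewrite mono_mem => /mapP [j _]; rewrite -!muln2; lia.
      move=> i j; rewrite !mem_iota -!muln2; lia.
    + exact: iota_uniq.
    move=> x; rewrite mem_cat !mono_mem mem_iota.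
    apply/idP/idP.
      move=> /orP [] /mapP [i]; rewrite mem_iota -muln2 => hi ->; lia.
    move=> hx; apply/orP.
    have [/eqP ho|/eqP he] := boolP (x %% 2 == 1).
      right; apply/mapP; exists (x.+1 %/ 2); first by rewrite mem_iota; lia.
      rewrite -muln2; lia.
    left; apply/mapP; exists (x %/ 2); first by rewrite mem_iota; lia.
    rewrite -muln2; lia.
  exists N; rewrite size_cat hsE hsO leq_addr take_size_cat // drop_size_cat //.
  split => //; split; apply: mono_sorted; rewrite sorted_map; apply: (sub_sorted _ (iota_ltn_sorted 1 N)); 
   move=> x y /=; rewrite -!muln2; lia.
- by rewrite size_cat hsE hsO leq_addr.
apply: alt_cat; rewrite mono_all; apply/allP => x /mapP [i]; rewrite mem_iota => hi ->.
  by rewrite odd_double.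
by move: hi; case: i => // i _; rewrite doubleS /= odd_double.
Qed.

Definition rk (s : seq nat) x := (count (fun y => y < x) s).+1.
Definition std s := map (rk s) s.

Lemma count_lt_strict s x y : x \in s -> x < y ->
  count (fun z => z < x) s < count (fun z => z < y) s.
Proof.
move=> hx hxy; elim: s hx => //= z s IH.
rewrite in_cons => /orP [/eqP <-|hx].
  rewrite ltnn hxy add0n add1n ltnS; apply: sub_count => w /=; lia.
have := IH hx.
case: (ltnP z x) => h1; case: (ltnP z y) => h2 /=; lia.
Qed.

Lemma rk_mono s x y : x \in s -> x < y -> rk s x < rk s y.
Proof. by move=> hx hxy; rewrite /rk ltnS; exact: count_lt_strict. Qed.

Lemma rk_bound s x : x \in s -> 0 < rk s x <= size s.
Proof.
move=> hx; rewrite /rk /= -(count_predC (fun y => y < x) s).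
have : 0 < count (predC (fun y => y < x)) s.
  rewrite -has_count; apply/hasP; exists x => //=; by rewrite ltnn.
lia.
Qed.

Lemma rk_ltE s x y : x \in s -> y \in s -> (rk s x < rk s y) = (x < y).
Proof.
move=> hx hy; case: (ltngtP x y) => h.
- exact: rk_mono.
- by apply/negbTE; rewrite -leqNgt ltnW // rk_mono.
- by rewrite h ltnn.
Qed.

Lemma std_perm s : uniq s -> is_perm (std s).
Proof.
move=> hu.
have hu' : uniq (std s).
  rewrite /std map_inj_in_uniq // => x y hx hy he.
  apply/eqP; case: (ltngtP x y) => // h.
    by have := rk_mono hx h; rewrite he ltnn.
  by have := rk_mono hy h; rewrite he ltnn.
rewrite /is_perm; apply: uniq_perm => //; first exact: iota_uniq.
have hsub : {subset std s <= iota 1 (size (std s))}.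
  move=> z /mapP [x hx ->]; rewrite mem_iota size_map; have := rk_bound hx.
  by move=> /andP [a b]; rewrite a /= add1n ltnS.
have [] := uniq_min_size hu' hsub; first by rewrite size_iota.
by [].
Qed.

Lemma std_iso s : order_iso s (std s).
Proof.
split; first by rewrite size_map.
move=> i j hi hj; rewrite /std !(nth_map 0) // rk_ltE //; exact: mem_nth.
Qed.

Lemma std_contains p s : subseq s p -> uniq s -> contains p (std s) /\ is_perm (std s).
Proof. by move=> h hu; split; [exists s; split; [|exact: std_iso] | exact: std_perm]. Qed.

Lemma count_lt_index V x : sorted ltn V -> x \in V -> count (fun y => y < x) V = index x V.
Proof.
elim: V => //= v V IH hs; rewrite in_cons => /orP [/eqP ->|hx].
  rewrite eqxx ltnn /=; apply/eqP; rewrite -leqn0 leqNgt -has_count; apply/hasP => -[y hy /= hyv].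
  move: hs; rewrite (path_sortedE ltn_trans) => /andP [/allP /(_ _ hy) /=]; lia.
move: hs; rewrite (path_sortedE ltn_trans) => /andP [/allP hall hs].
have hvx := hall _ hx.
have -> : (v == x) = false by apply/eqP => e; move: hvx; rewrite e ltnn.
by rewrite hvx IH.
Qed.

Section Cover.
Variables (A : seq nat) (B : nat).
Hypothesis hAB : forall x, x \in A -> 0 < x <= B.

Definition starts := [seq x <- undup A | x.-1 \notin A].
Definition rf s := find (fun d => s + d.+1 \notin A) (iota 0 B.+1).
Definition re s := s + rf s.

Lemma rf_lt s : rf s < B.+1.
Proof.
rewrite /rf; have := has_find (fun d => s + d.+1 \notin A) (iota 0 B.+1).
rewrite size_iota => <-; apply/hasP; exists B.
  rewrite mem_iota; lia.
by apply/negP => h; have := hAB h; lia.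
Qed.

Lemma rf_in s d : d < rf s -> s + d.+1 \in A.
Proof.
move=> hd; have := before_find 0 hd.
rewrite nth_iota; last by have := rf_lt s; lia.
by rewrite add0n => /negbFE.
Qed.

Lemma rf_out s : s + (rf s).+1 \notin A.
Proof.
have hs : has (fun d => s + d.+1 \notin A) (iota 0 B.+1) by rewrite has_find -/(rf s) size_iota rf_lt.
have := nth_find 0 hs; rewrite -/(rf s) nth_iota ?rf_lt //.
Qed.

Lemma in_run s x : s \in A -> s <= x <= re s -> x \in A.
Proof.
move=> hs /andP [h1 h2].
have [e|ne] := eqVneq x s; first by rewrite e.
have -> : x = s + (x - s).-1.+1 by lia.
apply: rf_in; rewrite /re in h2; lia.
Qed.

Lemma starts_in s : s \in starts -> (s \in A) /\ (s.-1 \notin A).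
Proof. by rewrite mem_filter mem_undup => /andP [-> ->]. Qed.

Lemma run_start x : x \in A -> exists s, s \in starts /\ s <= x /\ forall y, s <= y <= x -> y \in A.
Proof.
elim: x => [|x IH] hx; first by have := hAB hx.
have [hx'|hx'] := boolP (x \in A).
  have [s [hs [hsx hy]]] := IH hx'.
  exists s; split => //; split; first lia.
  move=> y hy'; have [e|ne] := eqVneq y x.+1; first by rewrite e.
  apply: hy; lia.
exists x.+1; split.
  by rewrite mem_filter mem_undup hx /= hx'.
split => // y hy; have -> : y = x.+1 by lia.
done.
Qed.

Lemma no_overlap a b x : a \in starts -> b \in starts -> a < b ->
  a <= x <= re a -> b <= x -> False.
Proof.
move=> ha hb hab hxa hbx.
have [haA _] := starts_in ha; have [_ hbA] := starts_in hb.
have : b.-1 \in A by apply: (in_run haA); lia.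
by rewrite (negbTE hbA).
Qed.

Lemma cover k : size starts <= k -> intervalicity_le A k.
Proof.
move=> hk.
exists [seq (s, re s) | s <- starts]; split; first by rewrite size_map.
split; first by move=> iv /mapP [s _ ->] /=; rewrite /re leq_addr.
split.
  move=> i j x; rewrite !size_map => hi hj hij.
  rewrite !(nth_map 0) //= /in_interval /=.
  have hu : uniq starts by rewrite filter_uniq // undup_uniq.
  have hne : nth 0 starts i != nth 0 starts j by rewrite nth_uniq.
  have hai := mem_nth 0 hi; have haj := mem_nth 0 hj.
  apply/negP => /andP [h1 h2].
  case: (ltngtP (nth 0 starts i) (nth 0 starts j)) => h.
  - by apply: (no_overlap hai haj h h1); case/andP: h2.
  - by apply: (no_overlap haj hai h h2); case/andP: h1.
  - by rewrite h eqxx in hne.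
move=> x; apply/idP/idP.
  move=> hx; have [s [hs [hsx hy]]] := run_start hx.
  apply/hasP; exists (s, re s); first by apply: map_f.
  rewrite /in_interval /= hsx /=.
  rewrite leqNgt; apply/negP => hlt.
  have : s + (rf s).+1 \in A by apply: hy; rewrite /re in hlt; lia.
  by rewrite (negbTE (rf_out s)).
move=> /hasP [iv /mapP [s hs ->]]; rewrite /in_interval /= => hx.
by apply: (in_run (proj1 (starts_in hs))).
Qed.

End Cover.

Definition pair2 (t : nat) := [:: t.-1; t].

Lemma flat_path (A : seq nat) L x0 : x0 \in A -> path ltn x0 L ->
  all (fun t => (t \in A) && (t.-1 \notin A)) L -> path ltn x0 (flatten (map pair2 L)).
Proof.
elim: L x0 => //= t L IH x0 hx0 /andP [hlt hp] /andP [/andP [htA htA'] hall].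
rewrite IH // andbT.
have : x0 != t.-1 by apply/eqP => e; rewrite -e hx0 in htA'.
lia.
Qed.

Lemma size_flat L : size (flatten (map pair2 L)) = (size L).*2.
Proof. by elim: L => //= t L IH; rewrite IH doubleS. Qed.

Lemma flat_mem L x : (x \in flatten (map pair2 L)) = has (fun t => (x == t.-1) || (x == t)) L.
Proof. by elim: L => //= t L IH; rewrite !in_cons IH orbA. Qed.

Lemma flat_sub L : {subset L <= flatten (map pair2 L)}.
Proof. by move=> x hx; rewrite flat_mem; apply/hasP; exists x => //; rewrite eqxx orbT. Qed.

Lemma idx_par L x : uniq (flatten (map pair2 L)) -> x \in flatten (map pair2 L) ->
  odd (index x (flatten (map pair2 L))) = (x \in L).
Proof.
elim: L => //= t L IH; rewrite !in_cons => /andP [h1 /andP [h2 hu]].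
have [e1|n1] := eqVneq t.-1 x.
  rewrite -e1 /=.
  have ne : t.-1 != t by move: h1; rewrite negb_or => /andP [].
  rewrite (negbTE ne) /=; symmetry; apply/negP => hL.
  by move: h1; rewrite negb_or => /andP [_ /negP]; apply; apply: flat_sub.
have [e2|n2] := eqVneq t x.
  by rewrite -e2 /=.
by rewrite /= => hx; rewrite negbK IH.
Qed.

Lemma iota_int m k : 1 <= m -> 1 <= k -> intervalicity_le (iota 1 m) k.
Proof.
move=> hm hk; exists [:: (1, m)]; split => //; split.
  by move=> iv; rewrite inE => /eqP -> /=.
split.
  by move=> i j x /=; case: i; case: j.
by move=> x; rewrite mem_iota /= /in_interval /= orbF; lia.
Qed.

Lemma a_to_b C : perm_class C -> unbounded_hpw C ->
  forall N, exists p, C p /\ N <= size p /\ horizontal_alternation p.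
Proof.
move=> [HC1 HC2] hun N.
have [p [Cp hnot]] := hun N.+1.
have hp := HC1 _ Cp.
have hup := perm_uniqP hp.
have [m hm] : exists m, ~ (1 <= m <= size p -> prefix_gc_le p m N.+1).
  by apply: not_all_ex_not.
have [hm1 hm2] := imply_to_and _ _ hm.
set A := take m p.
have hnA : ~ intervalicity_le A N.+1.
  move=> h; apply: hm2; split => //; apply: iota_int => //; lia.
have hAB : forall x, x \in A -> 0 < x <= size p.
  by move=> x hx; rewrite -(perm_memP _ hp); apply: mem_take hx.
have hS : N.+1 < size (starts A).
  rewrite ltnNge; apply/negP => h; apply: hnA; exact: (cover hAB h).
set T := sort leq (starts A).
have hT : sorted ltn T.
  rewrite ltn_sorted_uniq_leq sort_uniq filter_uniq ?undup_uniq //=.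
  apply: sort_sorted; move=> x y; exact: leq_total.
have hTs : size T = size (starts A) by rewrite size_sort.
have hTm : forall t, t \in T -> (t \in A) /\ (t.-1 \notin A).
  by move=> t; rewrite mem_sort => /starts_in.
case hTe : T hT hTs hTm => [|x0 T'] hT hTs hTm; first by move: hS; rewrite -hTs.
have hx0 : x0 \in A by apply: (proj1 (hTm x0 _)); rewrite in_cons eqxx.
have hall : all (fun t => (t \in A) && (t.-1 \notin A)) T'.
  apply/allP => t ht; have [a b] : (t \in A) /\ (t.-1 \notin A) by apply: hTm; rewrite in_cons ht orbT.
  by rewrite a b.
set V := flatten (map pair2 T').
have hpV : path ltn x0 V by exact: (flat_path hx0 hT hall).
have hsV : sorted ltn V by exact: path_sorted hpV.
have huV : uniq V by apply: (sorted_uniq ltn_trans) => //; exact: ltnn.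
have hx0V : all (ltn x0) V by move: hpV; rewrite (path_sortedE ltn_trans) => /andP [].
have hVp : {subset V <= p}.
  move=> x hx; rewrite (perm_memP _ hp).
  have := allP hx0V _ hx; have := hAB _ hx0 => /= h1 h2.
  move: hx; rewrite flat_mem => /hasP [t ht /orP [/eqP e|/eqP e]].
    have := hAB _ (proj1 (andP (allP hall t ht))); subst x; lia.
  by subst x; apply: hAB; have /andP [] := allP hall t ht.
set s := [seq x <- p | x \in V].
have hus : uniq s by exact: filter_uniq.
have hsV' : perm_eq s V.
  apply: uniq_perm => // x; rewrite mem_filter; case hxV: (x \in V) => //=.
  by rewrite hVp.
have hrk : forall x, x \in V -> rk s x = (index x V).+1.
  move=> x hx; rewrite /rk; congr S.
  by rewrite (permP hsV') count_lt_index.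
have hsplit : [seq x <- A | x \in V] ++ [seq x <- drop m p | x \in V] = s.
  by rewrite -filter_cat cat_take_drop.
have hT'A : forall x, x \in T' -> x \in A.
  by move=> x hx; have /andP [] := allP hall x hx.
have [pstd pcont] := std_contains (filter_subseq _ p) hus.
exists (std s); split; first exact: (HC2 _ _ Cp pcont pstd).
split.
  rewrite size_map (perm_size hsV') size_flat.
  have : size T' = (size (starts A)).-1 by rewrite -hTs.
  rewrite -muln2; lia.
rewrite /std -hsplit map_cat; apply: alt_cat.
  apply/allP => y /mapP [x]; rewrite mem_filter => /andP [hxV hxA] ->.
  rewrite hsplit hrk //= (idx_par huV hxV).
  move: hxV; rewrite flat_mem => /hasP [t ht /orP [/eqP e|/eqP e]].
    by subst x; have /andP [_ ] := allP hall t ht; rewrite hxA.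
  by subst x; rewrite ht.
apply/allP => y /mapP [x]; rewrite mem_filter => /andP [hxV hxD] ->.
rewrite hsplit hrk //= (idx_par huV hxV).
apply/negP => /hT'A hxA.
move: hup; rewrite -(cat_take_drop m p) cat_uniq => /and3P [_ /hasP H _].
by apply: H; exists x.
Qed.

Lemma filt_sorted c (p t X : seq nat) : uniq p -> subseq t p -> sorted (rc c) t ->
  {subset X <= t} -> sorted (rc c) [seq x <- p | x \in X].
Proof.
move=> hu ht hs hX.
have -> : [seq x <- p | x \in X] = [seq x <- t | x \in X].
  have ht' : t = [seq x <- p | x \in t] by exact: (subseq_uniqP hu ht).
  rewrite [in RHS]ht' -filter_predI; apply: eq_filter => x /=.
  by case hx: (x \in X) => //=; rewrite hX.
exact: (sorted_filter (@rc_trans c)).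
Qed.

Lemma filter_none (X s : seq nat) : {in s, forall x, x \notin X} -> [seq x <- s | x \in X] = [::].
Proof. by move=> h; rewrite (eq_in_filter (a2 := pred0)) ?filter_pred0 // => x /h /negbTE. Qed.

Lemma odd_gap a b : odd a -> odd b -> a < b -> a.+1 < b.
Proof.
move=> oa ob hab; have : a.+1 != b by apply/eqP => e; move: ob; rewrite -e /= oa.
lia.
Qed.

Lemma odd_pred_even e : 0 < e -> ~~ odd e -> odd e.-1.
Proof. by case: e => //= e _; rewrite negbK. Qed.

Lemma even_ge2 e : 0 < e -> ~~ odd e -> 1 < e.
Proof. by case: e => [|[|e]]. Qed.

Lemma phi_mono (K : seq nat) (P : pred nat) u v n : sorted ltn K ->
  (forall i, i < size K -> odd (nth 0 K i)) -> n <= size K -> 0 < u -> v <= n -> u < v ->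
  (if P u then (nth 0 K u.-1).+1 else nth 0 K u.-1) < (if P v then (nth 0 K v.-1).+1 else nth 0 K v.-1).
Proof.
move=> hK hKodd hn hu hv huv.
have hKl : nth 0 K u.-1 < nth 0 K v.-1.
  apply: (sorted_ltn_nth ltn_trans 0 hK); rewrite ?inE; lia.
have := odd_gap (hKodd u.-1 ltac:(lia)) (hKodd v.-1 ltac:(lia)) hKl.
case: (P u); case: (P v); lia.
Qed.

Lemma embed (C : seq nat -> Prop)
  (HC2 : forall p q : seq nat, C p -> is_perm q -> contains p q -> C q)
  p (t2 : seq nat) c1 c2 M :
  C p -> uniq p -> M <= size t2 -> all odd t2 ->
  sorted (rc c1) [seq x <- p | x \in map S t2] ->
  sorted (rc c2) [seq x <- p | x \in t2] ->
  {subset map S t2 <= p} -> {subset t2 <= p} -> uniq t2 ->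
  subseq ([seq x <- p | x \in map S t2] ++ [seq x <- p | x \in t2]) p ->
  forall q, in_juxtaposition c1 c2 q -> size q <= M -> C q.
Proof.
move=> Cp hup hsz2 hOodd hsE hsO hEp hOp hu2 hdec.
set E := map S t2.
move=> q [hq [m [hm [hq1 hq2]]]] hqM.
rewrite monotoneE in hq1; rewrite monotoneE in hq2.
set K := sort leq t2.
have huK : uniq K by rewrite sort_uniq.
have hK : sorted ltn K.
  rewrite ltn_sorted_uniq_leq huK /=; apply: sort_sorted; move=> x y; exact: leq_total.
have hszK : size q <= size K by rewrite size_sort; exact: leq_trans hqM hsz2.
have hKodd : forall i, i < size K -> odd (nth 0 K i).
  by move=> i hi; apply: (allP hOodd); rewrite -(mem_sort leq); exact: mem_nth.
set phi := fun v => if v \in take m q then (nth 0 K v.-1).+1 else nth 0 K v.-1.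
have hphi : forall u v, 0 < u -> v <= size q -> u < v -> phi u < phi v.
  move=> u v hu hv huv; exact: (phi_mono (fun v => v \in take m q) hK hKodd hszK hu hv huv).
have hqmem : forall v, v \in q -> 0 < v <= size q by move=> v; rewrite (perm_memP _ hq).
have hphiE : forall u v, u \in q -> v \in q -> (phi u < phi v) = (u < v).
  move=> u v hu hv; have := hqmem _ hu; have := hqmem _ hv => h1 h2.
  case: (ltngtP u v) => e.
  - by apply: hphi => //; [case/andP: h2 | case/andP: h1].
  - by apply/negbTE; rewrite -leqNgt ltnW // hphi //; [case/andP: h1 | case/andP: h2].
  - by rewrite e ltnn.
have hidx : forall v, v \in q -> v.-1 < size K.
  move=> v hv; have /andP [a b] := hqmem _ hv; apply: leq_trans _ hszK; by rewrite prednK.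
have hsplit : take m q ++ drop m q = q by rewrite cat_take_drop.
have hquniq : uniq q := perm_uniqP hq.
have hsub1 : subseq (map phi (take m q)) [seq x <- p | x \in E].
  apply: (sorted_sub_subseq (c := c1)) => //.
    rewrite sorted_map; apply: (sub_in_sorted (P := mem q) (e := rc c1)).
      move=> x y hx hy; rewrite /= /rc; have := hphiE x y hx hy; have := hphiE y x hy hx.
      by case: c1 {hsE hq1} => /= e1 e2; rewrite ?e1 ?e2.
      by apply/allP => x hx; exact: (mem_take hx).
    exact: hq1.
  move=> x /mapP [v hv ->]; rewrite mem_filter /phi hv.
  have hvq := mem_take hv; have := hqmem _ hvq => hv'.
  have hKin : nth 0 K v.-1 \in t2 by rewrite -(mem_sort leq); apply: mem_nth; exact: hidx.
  have hE' : (nth 0 K v.-1).+1 \in E by apply: map_f.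
  by rewrite hE' /=; apply: hEp.
have hsub2 : subseq (map phi (drop m q)) [seq x <- p | x \in t2].
  apply: (sorted_sub_subseq (c := c2)) => //.
    rewrite sorted_map; apply: (sub_in_sorted (P := mem q) (e := rc c2)).
      move=> x y hx hy; rewrite /= /rc; have := hphiE x y hx hy; have := hphiE y x hy hx.
      by case: c2 {hsO hq2 hsub1} => /= e1 e2; rewrite ?e1 ?e2.
      by apply/allP => x hx; exact: (mem_drop hx).
    exact: hq2.
  move=> x /mapP [v hv ->]; rewrite mem_filter /phi.
  have hnv : v \in take m q = false.
    apply/negP => hv1; move: hquniq; rewrite -hsplit cat_uniq => /and3P [_ /hasP H _].
    by apply: H; exists v.
  rewrite hnv.
  have hvq := mem_drop hv; have := hqmem _ hvq => hv'.
  have hKin : nth 0 K v.-1 \in t2 by rewrite -(mem_sort leq); apply: mem_nth; exact: hidx.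
  by rewrite hKin /=; exact: hOp.
apply: (HC2 p q Cp hq); exists (map phi q); split.
  rewrite -hsplit map_cat; apply: subseq_trans hdec; exact: cat_subseq.
split; first by rewrite size_map.
move=> i j; rewrite size_map => hi hj; rewrite !(nth_map 0) //; apply: hphiE; exact: mem_nth.
Qed.


Lemma key C : perm_class C ->
  (forall N, exists p, C p /\ N <= size p /\ horizontal_alternation p) ->
  forall M, exists c1 c2, forall q, in_juxtaposition c1 c2 q -> size q <= M -> C q.
Proof.
move=> [HC1 HC2] hb M.
set M1 := 2 ^ (M + M).
have [p [Cp [hsz ha]]] := hb (2 ^ (M1 + M1)).*2.
have hp := HC1 _ Cp; have hup := perm_uniqP hp.
set h := find odd p.
set pE := take h p; set pO := drop h p.
have [hE hO] := alt_split ha; rewrite -/h -/pE -/pO in hE hO.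
have hpEO : pE ++ pO = p by rewrite cat_take_drop.
have hszE : 2 ^ (M1 + M1) <= size pE.
  have := evens_size hp ha; rewrite -/h -/pE.
  move: hsz; have := leq_half_double (size p); rewrite -!muln2; lia.
have hupE : uniq pE by exact: take_uniq.
have [c1 [t1 [ht1 [hsz1 hs1]]]] := ES2 hupE hszE.
have ht1p : subseq t1 p by exact: (subseq_trans ht1 (take_subseq _ _)).
have ht1pos : forall e, e \in t1 -> 0 < e <= size p.
  by move=> e he; rewrite -(perm_memP _ hp); exact: (mem_subseq ht1p).
have ht1ev : forall e, e \in t1 -> ~~ odd e by move=> e he; apply: (allP hE); exact: (mem_subseq ht1).
set pO1 := [seq o <- pO | o.+1 \in t1].
have hszO1 : 2 ^ (M + M) <= size pO1.
  apply: leq_trans hsz1 _; rewrite -(size_map predn t1); apply: uniq_leq_size.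
    rewrite map_inj_in_uniq; first exact: (subseq_uniq ht1).
    move=> x y hx hy; have := ht1pos _ hx; have := ht1pos _ hy; lia.
  move=> o /mapP [e he ->]; rewrite mem_filter.
  have := ht1pos _ he; have := ht1ev _ he => hev hpos.
  have -> : e.-1.+1 = e by lia.
  rewrite he /=.
  have he2 : 1 < e by apply: even_ge2 => //; lia.
  have : e.-1 \in p by rewrite (perm_memP _ hp); lia.
  rewrite -hpEO mem_cat => /orP [] // hin.
  have hodd : odd e.-1 by apply: odd_pred_even => //; lia.
  by have := allP hE _ hin; rewrite /= hodd.
have hupO1 : uniq pO1 by rewrite filter_uniq // drop_uniq.
have [c2 [t2 [ht2 [hsz2 hs2]]]] := ES2 hupO1 hszO1.
have ht2p : subseq t2 p.
  exact: (subseq_trans ht2 (subseq_trans (filter_subseq _ _) (drop_subseq _ _))).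
have hOodd : forall o, o \in t2 -> odd o.
  move=> o ho; apply: (allP hO); apply: (mem_subseq (filter_subseq _ pO)); exact: (mem_subseq ht2).
have hOt1 : forall o, o \in t2 -> o.+1 \in t1.
  by move=> o ho; have := mem_subseq ht2 ho; rewrite mem_filter => /andP [].
set E := map S t2.
have hEt1 : {subset E <= t1} by move=> x /mapP [o ho ->]; exact: hOt1.
have hsE : sorted (rc c1) [seq x <- p | x \in E] by exact: (filt_sorted hup ht1p hs1 hEt1).
have hsO : sorted (rc c2) [seq x <- p | x \in t2] by exact: (filt_sorted hup ht2p hs2).
have hdec : subseq ([seq x <- p | x \in E] ++ [seq x <- p | x \in t2]) p.
  rewrite -{3}hpEO -{1}hpEO -{1}hpEO !filter_cat.
  rewrite (filter_none (X := E) (s := pO)); last first.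
    move=> x hx; apply/negP => /mapP [o ho ex].
    by have := allP hO _ hx; rewrite ex /= (hOodd _ ho).
  rewrite (filter_none (X := t2) (s := pE)); last first.
    move=> x hx; apply/negP => hx2.
    by have := allP hE _ hx; rewrite (hOodd _ hx2).
  rewrite cats0 /=; apply: cat_subseq; exact: filter_subseq.
exists c1, c2; apply: (embed HC2 Cp hup hsz2 _ hsE hsO _ _ _ hdec).
- by apply/allP.
- by move=> x /hEt1; exact: (mem_subseq ht1p).
- by move=> x; exact: (mem_subseq ht2p).
- exact: (sorted_uniq (@rc_trans c2) (@rc_irr c2)).
Qed.

Lemma b_to_c C : perm_class C ->
  (forall N, exists p, C p /\ N <= size p /\ horizontal_alternation p) ->
  exists c1 c2 : bool, forall p, in_juxtaposition c1 c2 p -> C p.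
Proof.
move=> HC hb; apply: NNPP => hn.
have H : forall c1 c2, exists q, in_juxtaposition c1 c2 q /\ ~ C q.
  move=> c1 c2; apply: NNPP => hn2; apply: hn; exists c1, c2 => q hq.
  apply: NNPP => hc; apply: hn2; by exists q.
have [q1 [j1 n1]] := H true true.
have [q2 [j2 n2]] := H true false.
have [q3 [j3 n3]] := H false true.
have [q4 [j4 n4]] := H false false.
have [c1 [c2 hc]] := key HC hb (size q1 + size q2 + size q3 + size q4).
case: c1 c2 hc => -[] hc.
- by apply: n1; apply: hc => //; lia.
- by apply: n2; apply: hc => //; lia.
- by apply: n3; apply: hc => //; lia.
- by apply: n4; apply: hc => //; lia.
Qed.


Theorem mainTheorem9 (C : seq nat -> Prop) (HC : perm_class C) :
  (unbounded_hpw C <->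
     (forall N, exists p, C p /\ N <= size p /\ horizontal_alternation p)) /\
  (unbounded_hpw C <->
     exists c1 c2 : bool, forall p, in_juxtaposition c1 c2 p -> C p).
Proof.
split; split.
- exact: a_to_b HC.
- exact: b_to_a HC.
- by move=> h; apply: b_to_c HC (a_to_b HC h).
- by move=> [c1 [c2 h]]; apply: b_to_a HC (c_to_b h).
Qed.
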